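(* Let $\mathbf{u}$ be a $1$-balanced sequence over $\{a,b\}$, let $\mathbf{a}=1^{\omega}$ (the constant sequence $111\cdots$), and let $\mathbf{b}=b_0b_1b_2\cdots$ be a $1$-balanced sequence over $\{2,3\}$. Then the ternary sequence $\mathbf{v}=\mathrm{colour}(\mathbf{u},\mathbf{a},\mathbf{b})$ is $2$-balanced.
   Context: A sequence $\mathbf{u}$ over an alphabet $\mathcal A$ is $C$-balanced ($C\ge 1$ an integer) if for any two factors $u,v$ of $\mathbf{u}$ with $|u|=|v|$ and every letter $x\in\mathcal A$ we have $\bigl||u|_x-|v|_x\bigr|\le C$, where $|w|_x$ is the number of occurrences of $x$ in $w$. Colouring: given a sequence $\mathbf{u}$ over $\{a,b\}$ and sequences $\mathbf{a},\mathbf{b}$ over disjoint alphabets $\mathcal A,\mathcal B$, $\mathrm{colour}(\mathbf{u},\mathbf{a},\mathbf{b})$ is the sequence over $\mathcal A\cup\mathcal B$ obtained from $\mathbf{u}$ by replacing the subsequence of all occurrences of $a$ (in order) by the sequence $\mathbf{a}$ and the subsequence of all occurrences of $b$ (in order) by the sequence $\mathbf{b}$. *)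

(* Defs.v *)
From mathcomp Require Import all_boot.
Set Implicit Arguments. Unset Strict Implicit. Unset Printing Implicit Defensive.

Definition factor (T : Type) (u : nat -> T) (i n : nat) : seq T :=
  mkseq (fun k => u (i + k)) n.

Definition occ (T : eqType) (x : T) (w : seq T) : nat := count_mem x w.

(* u is C-balanced: for all factors w, w' of equal length and every letter x,
   | |w|_x - |w'|_x | <= C.  (Letters outside the alphabet occur 0 times,
   so quantifying over all x : T is the same as over the alphabet.) *)
Definition balanced (T : eqType) (C : nat) (u : nat -> T) : Prop :=
  forall (i j n : nat) (x : T),
    occ x (factor u i n) <= occ x (factor u j n) + C.

(* colour(u, a, b) for u over {a,b} encoded as bool (true = letter a,
   false = letter b): the k-th occurrence of a is replaced by a k, the
   k-th occurrence of b by b k. *)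
Definition colour (T : Type) (u : nat -> bool) (a b : nat -> T) : nat -> T :=
  fun n => if u n then a (count id (mkseq u n))
           else b (count negb (mkseq u n)).

(* Main.v *)
Require Import Defs.
From mathcomp Require Import all_boot.

Lemma factorS (T : Type) (u : nat -> T) i n :
  factor u i n.+1 = rcons (factor u i n) (u (i + n)).
Proof. by rewrite /factor /mkseq -addn1 iotaD map_cat cats1 /= add0n. Qed.

Lemma mkseqS' (T : Type) (u : nat -> T) n :
  mkseq u n.+1 = rcons (mkseq u n) (u n).
Proof. by rewrite /mkseq -addn1 iotaD map_cat cats1 /= add0n. Qed.

Lemma cnt_split (u : nat -> bool) i n :
  count negb (mkseq u (i + n)) = count negb (mkseq u i) + count negb (factor u i n).
Proof.
elim: n => [|n IH]; first by rewrite addn0 /factor /= addn0.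
by rewrite addnS mkseqS' factorS -!cats1 !count_cat IH addnA.
Qed.

Lemma occ_rcons (T : eqType) (x : T) w y : occ x (rcons w y) = occ x w + (y == x).
Proof. by rewrite /occ -cats1 count_cat /= addn0. Qed.

Lemma occ_mono (T : eqType) (x : T) w i m d :
  occ x (factor w i m) <= occ x (factor w i (m + d)) <= occ x (factor w i m) + d.
Proof.
elim: d => [|d IH]; first by rewrite !addn0 leqnn.
case/andP: IH => H1 H2.
rewrite addnS factorS occ_rcons; apply/andP; split.
  exact: leq_trans H1 (leq_addr _ _).
by rewrite addnS -addn1 leq_add // leq_b1.
Qed.

Lemma key (u : nat -> bool) (b : nat -> nat) x i n : x != 1 ->
  occ x (factor (colour u (fun _ => 1) b) i n) =
  occ x (factor b (count negb (mkseq u i)) (count negb (factor u i n))).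
Proof.
move=> hx; elim: n => [|n IH]; first by [].
rewrite !factorS occ_rcons IH -cats1 count_cat /= /colour.
case hu: (u (i + n)) => /=.
  by rewrite eq_sym (negbTE hx) !addn0.
by rewrite !addn0 addn1 factorS occ_rcons cnt_split.
Qed.

Lemma key1 (u : nat -> bool) (b : nat -> nat) i n : (forall k, b k = 2 \/ b k = 3) ->
  occ 1 (factor (colour u (fun _ => 1) b) i n) = count id (factor u i n).
Proof.
move=> hb; elim: n => [|n IH]; first by [].
rewrite !factorS occ_rcons IH -cats1 count_cat /= /colour.
case: (u (i + n)) => //=.
by case: (hb (count negb (mkseq u (i + n)))) => ->.
Qed.

Lemma occ_true w : occ true w = count id w.
Proof. by apply: eq_count => y; case: y. Qed.

Lemma occ_false w : occ false w = count negb w.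
Proof. by apply: eq_count => y; case: y. Qed.

Theorem lemma1 (u : nat -> bool) (b : nat -> nat) :
  balanced 1 u ->
  (forall k, b k = 2 \/ b k = 3) ->
  balanced 1 b ->
  balanced 2 (colour u (fun _ => 1) b).
Proof.
move=> hu hb2 hb i j n x.
case: (eqVneq x 1) => [->|hx].
  rewrite !key1 //.
  have := hu i j n true; rewrite !occ_true => h.
  by apply: leq_trans h _; rewrite leq_add2l.
rewrite !key //.
set ci := count negb (mkseq u i); set cj := count negb (mkseq u j).
have := hu i j n false; rewrite !occ_false.
set fi := count negb (factor u i n); set fj := count negb (factor u j n) => h.
case: (leqP fi fj) => hle.
  have := occ_mono _ x b cj fi (fj - fi); rewrite subnKC // => /andP [H1 _].
  apply: leq_trans (hb ci cj fi x) _.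
  exact: leq_add H1 (isT : 1 <= 2).
have efi : fi = fj + 1 by apply/eqP; rewrite eqn_leq h addn1 hle.
have := occ_mono _ x b ci fj 1; rewrite -efi => /andP [_ H2].
apply: leq_trans H2 _.
have := hb ci cj fj x => H3.
by rewrite -(addn1 1) addnA leq_add2r.
Qed.
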